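(* Let $\mathcal G$ be a constructor GRS over a finite signature $\mathcal F$ that is precedence terminating with argument separation, and let $G_0\in\mathcal{TG}(\mathcal F)$ be a closed basic term graph. If $G_0\to_{\mathcal G}^{*}G$, then for any nodes $v\in\mathrm{SP}_G$ and $u\in\mathrm{nrm}(v)$ we have $G{\restriction}u\sqsubset_{\mathrm{nrm}}G_0$; that is, $G{\restriction}u$ is a sub-term graph (with the same nodes, labels and successors) of $G_0{\restriction}w$ for some $w\in\mathrm{nrm}(\rho_{G_0})$.
   Context: Term graphs. $\mathcal F=\mathcal C\cup\mathcal D$ is a finite signature (constructors and defined symbols, disjoint) with arity function $\mathrm{ar}$. A labeled graph consists of a finite acyclic directed graph $(V_G,E_G)$, a partial labeling $\mathrm{lab}_G:V_G\to\mathcal F$ and a successor function $\mathrm{att}_G:V_G\to V_G^*$ such that $\mathrm{att}_G(v)$ has length $\mathrm{ar}(\mathrm{lab}_G(v))$ if $v$ is labeled and is empty otherwise, and the set of entries of $\mathrm{att}_G(v)$ equals $\{u:(v,u)\in E_G\}$. Unlabeled nodes act as variables. A term graph additionally has a root $\rho_G$ from which every node is reachable; $\mathcal{TG}(\mathcal F)$ is the set of term graphs over $\mathcal F$ and $\mathcal{TG}(\mathcal C)$ those whose labeled nodes carry constructors. $G{\restriction}v$ is the sub-term graph of nodes reachable from $v$, rooted at $v$; $H\subseteq G$ means $H=G{\restriction}v$ for some $v$. $G$ is closed if every node is labeled; basic if $\mathrm{lab}_G(\rho_G)\in\mathcal D$ and $G{\restriction}v\in\mathcal{TG}(\mathcal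 C)$ for every successor $v$ of $\rho_G$. Argument separation. The argument positions of each $f\in\mathcal F$ are split into normal and safe ones; constructors have only safe positions; nodes with the same label have the same separation. $\mathrm{nrm}(v)$ (resp. $\mathrm{safe}(v)$) is the set of successors of $v$ at normal (resp. safe) positions. $H\sqsubset_{\mathrm{nrm}}G$ means $H\subseteq G{\restriction}v$ for some $v\in\mathrm{nrm}(\rho_G)$. Rewriting. Homomorphisms of labeled graphs preserve labels, successor sequences at labeled nodes (nothing required at unlabeled nodes), and the normal/safe split; homomorphisms of term graphs also map root to root. A graph rewrite rule $(K,l,r)$ is a labeled graph $K$ with distinct nodes $l,r$ such that every unlabeled node of $K{\restriction}r$ lies in $K{\restriction}l$; it is a constructor rule if $K{\restriction}l$ is basic. A GRS is a (possibly infinite) set of rules; a constructor GRS consists of constructor rules. For a rule $(K,l,r)$ and homomorphism $\varphi:K{\restriction}l\to G$, the rewrite step $G\to_{\mathcal G}H$ is the standard build/redirection/garbage-collection step: the labeled part of $K{\restriction}r$ not in $K{\restriction}l$ is freshly copied into $G$ (unlabeled nodes mapped via $\varphi$), edges into $\varphi(l)$ (and the root, if it is $\varphi(l)$) are redirected to the image of $r$, and unreachable nodes are removed; other nodes keep their identity. $\to^*_{\mathcal G}$ is the reflexive-transitive closure. Precedence termination with argument separation. A precedence $\sqsubset$ is a well-founded strict partial order on $\mathcal F$ with all constructors minimal. $H\sqsubset_{\mathrm{pt}}G$ holds if $\mathrm{lab}_H(v)\sqsubset\mathrm{lab}_G(\rho_G)$ for every labeled node $v$ of $H$ and either (1) $H=G{\restriction}u$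 or $H\sqsubset_{\mathrm{pt}}G{\restriction}u$ for some successor $u$ of $\rho_G$; or (2) $\rho_H$ is labeled, $H{\restriction}v\sqsubset_{\mathrm{nrm}}G$ for each $v\in\mathrm{nrm}(\rho_H)$, and $H{\restriction}v\sqsubset_{\mathrm{pt}}G$ for each $v\in\mathrm{safe}(\rho_H)$. A GRS is precedence terminating with argument separation if for some argument separation and precedence, $K{\restriction}r\sqsubset_{\mathrm{pt}}K{\restriction}l$ for every rule $(K,l,r)$. Safe paths. A path (sequence of nodes each a successor of the previous) is safe if each next node is a safe successor of the previous; $\mathrm{SP}_G$ is the set of nodes lying on a safe path from $\rho_G$ (including $\rho_G$). *)

(* Defs.v *)
From mathcomp Require Import all_boot.
Set Implicit Arguments.
Unset Strict Implicit.
Unset Printing Implicit Defensive.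

(* Nodes are natural numbers (an infinite supply, so fresh nodes exist and
   node identity is meaningful). *)

Section TermGraphs.
Variable F : finType.
Variable ar : F -> nat.
Variable isC : pred F.             (* constructors; D = the complement     *)
Variable normal : F -> nat -> bool. (* argument separation: position i of f is normal *)
Variable prec : rel F.

(* A labeled graph: node set, partial labeling, successor function.
   Values of lab/att outside the node set are irrelevant junk. *)
Record lgraph := LG { node : nat -> Prop; lab : nat -> option F; att : nat -> seq nat }.
Record tgraph := TG { tgr : lgraph; root : nat }.

Inductive reach (G : lgraph) : nat -> nat -> Prop :=
| reach_refl v : reach G v v
| reach_step v u w : u \in att G v -> reach G u w -> reach G v w.

Definition wf_lg (G : lgraph) : Prop :=
  (exists s : seq nat, forall x, node G x -> x \in s) /\
  (forall x, node G x ->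
     size (att G x) = (match lab G x with Some f => ar f | None => 0 end)) /\
  (forall x y, node G x -> y \in att G x -> node G y) /\
  (forall x, node G x -> ~ exists y, y \in att G x /\ reach G y x).

Definition wf_tg (G : tgraph) : Prop :=
  wf_lg (tgr G) /\ node (tgr G) (root G) /\
  (forall x, node (tgr G) x -> reach (tgr G) (root G) x).

Definition geq (A B : lgraph) : Prop :=
  (forall x, node A x <-> node B x) /\
  (forall x, node A x -> lab A x = lab B x /\ att A x = att B x).
Definition tgeq (A B : tgraph) : Prop := geq (tgr A) (tgr B) /\ root A = root B.

Definition restr (G : lgraph) (v : nat) : lgraph := LG (reach G v) (lab G) (att G).
Definition restr_tg (G : tgraph) (v : nat) : tgraph := TG (restr (tgr G) v) v.

Definition subtg (H G : tgraph) : Prop :=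
  exists v, node (tgr G) v /\ tgeq H (restr_tg G v).

Definition closed_tg (G : tgraph) : Prop := forall x, node (tgr G) x -> lab (tgr G) x <> None.

Definition basic (G : tgraph) : Prop :=
  (exists f, lab (tgr G) (root G) = Some f /\ ~~ isC f) /\
  (forall v, v \in att (tgr G) (root G) -> forall x g,
      reach (tgr G) v x -> lab (tgr G) x = Some g -> isC g).

Definition nrm (G : lgraph) (v : nat) : seq nat :=
  match lab G v with
  | Some f => [seq nth 0 (att G v) i | i <- iota 0 (size (att G v)) & normal f i]
  | None => [::] end.
Definition safe (G : lgraph) (v : nat) : seq nat :=
  match lab G v with
  | Some f => [seq nth 0 (att G v) i | i <- iota 0 (size (att G v)) & ~~ normal f i]
  | None => [::] end.

Definition nrmsub (H G : tgraph) : Prop :=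
  exists v, v \in nrm (tgr G) (root G) /\ subtg H (restr_tg G v).

Inductive SP (G : tgraph) : nat -> Prop :=
| SP_root : SP G (root G)
| SP_step v u : SP G v -> u \in safe (tgr G) v -> SP G u.

Definition labs_below (H G : tgraph) : Prop :=
  forall x f, node (tgr H) x -> lab (tgr H) x = Some f ->
    exists g, lab (tgr G) (root G) = Some g /\ prec f g.

Inductive pt : tgraph -> tgraph -> Prop :=
| pt_sub H G u : labs_below H G -> u \in att (tgr G) (root G) ->
    (tgeq H (restr_tg G u) \/ pt H (restr_tg G u)) -> pt H G
| pt_arg H G : labs_below H G -> lab (tgr H) (root H) <> None ->
    (forall v, v \in nrm (tgr H) (root H) -> nrmsub (restr_tg H v) G) ->
    (forall v, v \in safe (tgr H) (root H) -> pt (restr_tg H v) G) -> pt H G.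

Record rule := Rule { rK : lgraph; rl : nat; rr : nat }.

Definition is_rule (R : rule) : Prop :=
  wf_lg (rK R) /\ node (rK R) (rl R) /\ node (rK R) (rr R) /\ rl R <> rr R /\
  (forall x, reach (rK R) (rr R) x -> lab (rK R) x = None -> reach (rK R) (rl R) x).

Definition lhs (R : rule) : tgraph := TG (restr (rK R) (rl R)) (rl R).
Definition rhs (R : rule) : tgraph := TG (restr (rK R) (rr R)) (rr R).

Definition constructor_rule (R : rule) : Prop := is_rule R /\ basic (lhs R).

Definition lhom (A B : lgraph) (phi : nat -> nat) : Prop :=
  (forall x, node A x -> node B (phi x)) /\
  (forall x f, node A x -> lab A x = Some f ->
     lab B (phi x) = Some f /\ att B (phi x) = map phi (att A x)).

(* Build + redirection: H2 is the graph obtained from G by freshly copying the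
   part of K|r not in K|l (via psi, which agrees with phi on K|l), and
   redirecting every edge into phi(l) to psi(r). *)
Definition build_redirect (R : rule) (phi psi : nat -> nat) (G : tgraph)
    (H2 : lgraph) : Prop :=
  let K := rK R in let l := rl R in let r := rr R in
  let newn w := reach K r w /\ ~ reach K l w in
  let red x := if x == phi l then psi r else x in
  (forall w, reach K r w -> reach K l w -> psi w = phi w) /\
  (forall w, newn w -> ~ node (tgr G) (psi w)) /\
  (forall w1 w2, newn w1 -> newn w2 -> psi w1 = psi w2 -> w1 = w2) /\
  (forall x, node H2 x <-> node (tgr G) x \/ exists w, newn w /\ psi w = x) /\
  (forall x, node (tgr G) x ->
     lab H2 x = lab (tgr G) x /\ att H2 x = map red (att (tgr G) x)) /\
  (forall w, newn w ->
     lab H2 (psi w) = lab K w /\ att H2 (psi w) = map (fun y => red (psi y)) (att K w)).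

(* rewrite step G ->_GRS H (garbage collection = restriction to the new root) *)
Definition step (GRS : rule -> Prop) (G H : tgraph) : Prop :=
  exists R, GRS R /\ exists phi, lhom (tgr (lhs R)) (tgr G) phi /\
  exists psi H2, build_redirect R phi psi G H2 /\
  tgeq H (TG (restr H2 (if root G == phi (rl R) then psi (rr R) else root G))
             (if root G == phi (rl R) then psi (rr R) else root G)).

Inductive steps (GRS : rule -> Prop) : tgraph -> tgraph -> Prop :=
| steps_refl G : steps GRS G G
| steps_cons G G' H : step GRS G G' -> steps GRS G' H -> steps GRS G H.

End TermGraphs.

(* Main.v *)
Require Import Defs.
Set Implicit Arguments.
Unset Strict Implicit.
From mathcomp Require Import all_boot.
From Stdlib Require Import Classical.
Import Defs.

Lemma reach_trans (F : finType) (G : lgraph F) a b c :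
  reach G a b -> reach G b c -> reach G a c.
Proof. elim=> [//|v u w Hu _ IH] H; exact: reach_step Hu (IH H). Qed.

Lemma reach_rcons (F : finType) (G : lgraph F) a b c :
  reach G a b -> c \in att G b -> reach G a c.
Proof. move=> H Hc; apply: reach_trans H _; apply: reach_step Hc (reach_refl _ _). Qed.

Lemma reach_restr (F : finType) (G : lgraph F) v a b :
  reach (restr G v) a b <-> reach G a b.
Proof.
split; elim=> [x|x y z Hy _ IH]; try exact: reach_refl; apply: reach_step IH; exact: Hy.
Qed.

Lemma reach_att_ext (F : finType) (G1 G2 : lgraph F) a b :
  att G1 = att G2 -> reach G1 a b -> reach G2 a b.
Proof. move=> E; elim=> [x|x y z Hy _ IH]; first exact: reach_refl.
apply: reach_step IH; by rewrite -E. Qed.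

Lemma nrm_att (F : finType) normal (G : lgraph F) v u : u \in nrm normal G v -> u \in att G v.
Proof.
rewrite /nrm; case: (lab G v) => [f|//].
case/mapP=> i; rewrite mem_filter mem_iota => /andP[_ /andP[_ Hi]] ->.
by apply: mem_nth; rewrite add0n in Hi.
Qed.

Lemma safe_att (F : finType) normal (G : lgraph F) v u : u \in safe normal G v -> u \in att G v.
Proof.
rewrite /safe; case: (lab G v) => [f|//].
case/mapP=> i; rewrite mem_filter mem_iota => /andP[_ /andP[_ Hi]] ->.
by apply: mem_nth; rewrite add0n in Hi.
Qed.

Lemma att_nrm_safe (F : finType) normal (G : lgraph F) v u f :
  lab G v = Some f -> u \in att G v -> u \in nrm normal G v \/ u \in safe normal G v.
Proof.
move=> Hl Hu; rewrite /nrm /safe Hl.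
have Hi : index u (att G v) < size (att G v) by rewrite index_mem.
have Hn : nth 0 (att G v) (index u (att G v)) = u by rewrite nth_index.
case Nf: (normal f (index u (att G v))); [left|right]; rewrite -Hn;
  apply: map_f; rewrite mem_filter mem_iota add0n Hi ?Nf //.
Qed.

Lemma nrm_map (F : finType) normal (G1 G2 : lgraph F) x1 x2 (f : nat -> nat) :
  lab G2 x2 = lab G1 x1 -> att G2 x2 = map f (att G1 x1) ->
  nrm normal G2 x2 = map f (nrm normal G1 x1).
Proof.
move=> Hl Ha; rewrite /nrm Hl; case: (lab G1 x1) => [g|//].
rewrite Ha size_map -map_comp; apply/eq_in_map => i.
rewrite mem_filter mem_iota add0n => /andP[_ Hi] /=.
by rewrite (nth_map 0).
Qed.

Lemma nrm_C (F : finType) normal (isC : pred F) (G : lgraph F) x g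
  (sep_C : forall c i, isC c -> ~~ normal c i) :
  lab G x = Some g -> isC g -> nrm normal G x = [::].
Proof.
move=> Hl Hg; rewrite /nrm Hl.
have -> : [seq i <- iota 0 (size (att G x)) | normal g i] = [::].
  apply/eqP; rewrite -[_ == _]negbK -has_filter; apply/hasPn => i _.
  exact: sep_C.
by [].
Qed.
Import Defs.

Fixpoint pt_ind2 (F : finType) (normal : F -> nat -> bool) (prec : rel F)
  (P : tgraph F -> tgraph F -> Prop)
  (Hsub : forall H G (u : nat), labs_below prec H G -> u \in att (tgr G) (root G) ->
     (tgeq H (restr_tg G u) \/ (pt normal prec H (restr_tg G u) /\ P H (restr_tg G u))) -> P H G)
  (Harg : forall H G, labs_below prec H G -> lab (tgr H) (root H) <> None ->
    (forall v : nat, v \in nrm normal (tgr H) (root H) -> nrmsub normal (restr_tg H v) G) ->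
    (forall v : nat, v \in safe normal (tgr H) (root H) -> pt normal prec (restr_tg H v) G) ->
    (forall v : nat, v \in safe normal (tgr H) (root H) -> P (restr_tg H v) G) -> P H G)
  H G (p : pt normal prec H G) {struct p} : P H G :=
  match p with
  | pt_sub H G u a b c => Hsub H G u a b
      (match c with or_introl t => or_introl t
       | or_intror q => or_intror (conj q (@pt_ind2 F normal prec P Hsub Harg _ _ q)) end)
  | pt_arg H G a b c e => Harg H G a b c e (fun v hv => @pt_ind2 F normal prec P Hsub Harg _ _ (e v hv))
  end.

Lemma ptA (F : finType) normal (prec : rel F) (isC : pred F) (K : lgraph F) l
 (prec_min : forall f c, isC c -> ~~ prec f c)
 (bas : forall v, v \in att K l -> forall x g, reach K v x -> lab K x = Some g -> isC g)
 H G (p : pt normal prec H G) :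
 lab (tgr H) = lab K -> att (tgr H) = att K -> lab (tgr G) = lab K -> att (tgr G) = att K ->
 node (tgr H) (root H) ->
 (exists2 v, v \in att K l & reach K v (root G)) ->
 forall w, reach K (root H) w -> reach K l w.
Proof.
elim/pt_ind2: H G / p.
- move=> H G u lb hu [t|[q IH]] lH aH lG aG nH [v hv rv] w rw.
  + have ru : reach K l u.
      apply: reach_rcons (reach_step hv rv) _; by rewrite -aG.
    apply: reach_trans ru _; by move: rw; rewrite t.2.
  + apply: IH => //; exists v => //; apply: reach_rcons rv _; by rewrite -aG.
- move=> H G lb hl _ _ _ lH aH lG aG nH [v hv rv] w rw.
  case E: (lab (tgr H) (root H)) hl => [f|//] _.
  have [g [Hg Hp]] := lb _ _ nH E.
  have Cg : isC g by apply: (bas v hv (root G)) => //; rewrite -lG.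
  by move: (prec_min f g Cg); rewrite Hp.
Qed.

Lemma reach_inv (F : finType) (G : lgraph F) a b :
  reach G a b -> a = b \/ exists2 c, c \in att G a & reach G c b.
Proof. case=> [x|x y z Hy R]; [by left|right; by exists y]. Qed.

Lemma nrm_eq (F : finType) normal (G1 G2 : lgraph F) :
  lab G1 = lab G2 -> att G1 = att G2 -> nrm normal G1 = nrm normal G2.
Proof. by move=> E1 E2; rewrite /nrm E1 E2. Qed.

Lemma safe_eq (F : finType) normal (G1 G2 : lgraph F) :
  lab G1 = lab G2 -> att G1 = att G2 -> safe normal G1 = safe normal G2.
Proof. by move=> E1 E2; rewrite /safe E1 E2. Qed.

Lemma nrmsub_reach (F : finType) normal (H G : tgraph F) (K : lgraph F) y :
  att (tgr G) = att K ->
  nrmsub normal (restr_tg H y) G ->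
  exists2 z, z \in nrm normal (tgr G) (root G) & reach K z y.
Proof.
move=> aG [z [hz [v' [nv' t]]]]; exists z => //.
have -> : y = v' by exact: t.2.
exact: reach_att_ext aG nv'.
Qed.

Lemma ptB (F : finType) normal (prec : rel F) (isC : pred F) (K : lgraph F) l
 (prec_min : forall f c, isC c -> ~~ prec f c)
 (bas : forall v, v \in att K l -> forall x g, reach K v x -> lab K x = Some g -> isC g)
 H G (p : pt normal prec H G) :
 lab (tgr H) = lab K -> att (tgr H) = att K -> lab (tgr G) = lab K -> att (tgr G) = att K ->
 node (tgr H) (root H) -> root G = l ->
 forall w y, reach K (root H) w -> ~ reach K l w -> lab K w <> None ->
   y \in nrm normal K w -> exists2 z, z \in nrm normal K l & reach K z y.
Proof.
elim/pt_ind2: H G / p.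
- move=> H G u lb hu [t|[q _]] lH aH lG aG nH rG w y rw nrw _ _; exfalso; apply: nrw.
  + have hu' : u \in att K l by rewrite -rG -aG.
    apply: reach_step hu' _; by move: rw; rewrite t.2.
  + apply: (ptA prec_min bas q) => //; exists u => //; [by rewrite -rG -aG|exact: reach_refl].
- move=> H G lb hl hn hs IHs lH aH lG aG nH rG w y rw nrw lw hy.
  have nK : nrm normal (tgr G) (root G) = nrm normal K l by rewrite rG (nrm_eq _ lG aG).
  case: (reach_inv rw) => [Ew|[c hc rc]].
  + subst w.
    have hy' : y \in nrm normal (tgr H) (root H) by rewrite (nrm_eq _ lH aH).
    have [z hz rz] := nrmsub_reach aG (hn y hy').
    by exists z => //; rewrite -nK.
  + case E: (lab (tgr H) (root H)) hl => [f|//] _.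
    have hc' : c \in att (tgr H) (root H) by rewrite aH.
    case: (att_nrm_safe normal E hc') => hc2.
    * have [z hz rz] := nrmsub_reach aG (hn c hc2).
      exfalso; apply: nrw; have hz' : z \in att K l by apply: (@nrm_att _ normal); rewrite -nK.
      exact: (reach_step hz' (reach_trans rz rc)).
    * exact: (IHs c hc2 lH aH lG aG (reach_refl _ _) rG w y rc nrw lw hy).
Qed.

Definition Cl (F : finType) (G : lgraph F) :=
  forall x y, node G x -> y \in att G x -> node G y.

Lemma cl_reach (F : finType) (G : lgraph F) a b :
  Cl G -> node G a -> reach G a b -> node G b.
Proof. move=> C Na R; elim: R Na => [//|v u w Hu _ IH] Nv; apply: IH; exact: C Hu. Qed.

Definition Good (F : finType) normal (G0 G : tgraph F) (a : nat) : Prop :=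
  node (tgr G) a /\ exists2 w, w \in nrm normal (tgr G0) (root G0) &
  (reach (tgr G0) w a /\ forall y, reach (tgr G) a y ->
     lab (tgr G) y = lab (tgr G0) y /\ att (tgr G) y = att (tgr G0) y).

Definition Inv (F : finType) normal (G0 G : tgraph F) : Prop :=
  node (tgr G) (root G) /\ Cl (tgr G) /\
  (forall x u, node (tgr G) x -> u \in nrm normal (tgr G) x -> Good normal G0 G u).

Lemma good_reach (F : finType) normal (G0 G : tgraph F) a y :
  Good normal G0 G a -> reach (tgr G) a y -> reach (tgr G0) a y.
Proof.
move=> [_ [w _ [_ Ag]]] R.
suff : forall a', reach (tgr G) a a' -> reach (tgr G) a' y -> reach (tgr G0) a' y.
  by move/(_ a (reach_refl _ _)); apply.
move=> a' Ra' R'; elim: R' Ra' => [x|v u w' Hu _ IH] Rv; first exact: reach_refl.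
have Hu' : u \in att (tgr G0) v by rewrite -(Ag v Rv).2.
apply: reach_step Hu' (IH (reach_rcons Rv Hu)).
Qed.

Lemma good_ne (F : finType) normal (isC : pred F) (G0 G : tgraph F) a y x0 f :
  basic isC G0 -> Good normal G0 G a -> reach (tgr G) a y ->
  lab (tgr G) x0 = Some f -> ~~ isC f -> y <> x0.
Proof.
move=> B Gd R Hl Hf E; subst y.
have R0 := good_reach Gd R.
case: Gd => _ [w hw [rw Ag]].
have L : lab (tgr G0) x0 = Some f by rewrite -(Ag x0 R).1.
have := B.2 w (nrm_att hw) x0 f (reach_trans rw R0) L.
by rewrite (negbTE Hf).
Qed.

Lemma good_sub (F : finType) normal (G0 G : tgraph F) a b :
  Cl (tgr G) -> Good normal G0 G a -> reach (tgr G) a b -> Good normal G0 G b.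
Proof.
move=> C Gd R; have R0 := good_reach Gd R.
case: Gd => Na [w hw [rw Ag]]; split; first exact: cl_reach C Na R.
exists w => //; split; first exact: reach_trans rw R0.
move=> y Ry; apply: Ag; exact: reach_trans R Ry.
Qed.

Lemma good_nrmsub (F : finType) normal (G0 G : tgraph F) u :
  Good normal G0 G u -> nrmsub normal (restr_tg G u) G0.
Proof.
move=> Gd; have R0 := good_reach Gd.
case: Gd => Na [w hw [rw Ag]]; exists w; split => //.
exists u; split; first exact: rw.
split; last by [].
split => x /=.
- split; first by move=> Rx; apply/reach_restr; exact: R0 Rx.
  move=> /reach_restr Rx.
  suff : forall a', reach (tgr G) u a' -> reach (tgr G0) a' x -> reach (tgr G) a' x.
    by move/(_ u (reach_refl _ _)); apply.
  move=> a' Ra' R'; elim: R' Ra' => [z|v u' w' Hu _ IH] Rv; first exact: reach_refl.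
  have Hu' : u' \in att (tgr G) v by rewrite (Ag v Rv).2.
  apply: reach_step Hu' (IH (reach_rcons Rv Hu')).
- move=> Rx; exact: Ag.
Qed.

Lemma inv_G0 (F : finType) (ar : F -> nat) normal (isC : pred F) (G0 : tgraph F)
  (sep_C : forall c i, isC c -> ~~ normal c i) :
  wf_tg ar G0 -> basic isC G0 -> Inv normal G0 G0.
Proof.
move=> [[_ [_ [Cl0 _]]] [Nr Rr]] B; split => //; split => //.
move=> x u Nx Hu.
have [Ex|[c hc rc]] := reach_inv (Rr x Nx).
- subst x; split; first exact: Cl0 Nx (nrm_att Hu).
  by exists u => //; split => //; exact: reach_refl.
- exfalso; case E: (lab (tgr G0) x) Hu => [g|]; last by rewrite /nrm E.
  by rewrite (nrm_C sep_C E (B.2 c hc x g rc E)).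
Qed.

Lemma nrm_same (F : finType) normal (G1 G2 : lgraph F) x :
  lab G2 x = lab G1 x -> att G2 x = att G1 x -> nrm normal G2 x = nrm normal G1 x.
Proof. by rewrite /nrm => -> ->. Qed.

Lemma step_inv (F : finType) (ar : F -> nat) (isC : pred F)
  (normal : F -> nat -> bool) (prec : rel F) (GRS : rule F -> Prop)
  (prec_min : forall f c, isC c -> ~~ prec f c)
  (GRS_cons : forall R, GRS R -> constructor_rule ar isC R)
  (GRS_pt : forall R, GRS R -> pt normal prec (rhs R) (lhs R))
  (G0 G H : tgraph F) (B0 : basic isC G0) :
  Inv normal G0 G -> step GRS G H -> Inv normal G0 H.
Proof.
move=> [NrG [ClG GdG]] [R [gR [phi [hom [psi [H2 [br tq]]]]]]].
have [[wfK [NKl [NKr [lr Kvar]]]] [[f [Lf Cf]] BK]] := GRS_cons R gR.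
have Pt := GRS_pt R gR.
move: br => [psi_eq [fresh [inj [nodeH2 [oldH2 newH2]]]]].
move: tq => [[nodeH attH] rootH].
simpl in nodeH, attH, rootH, Lf.
set rt := (if root G == phi (rl R) then psi (rr R) else root G) in nodeH rootH.
have BKl : forall v, v \in att (rK R) (rl R) -> forall x g, reach (rK R) v x -> lab (rK R) x = Some g -> isC g.
  move=> v hv x g Rx Lx; apply: (BK v hv x g) => //; exact: (proj2 (@reach_restr _ (rK R) (rl R) v x) Rx).
have homN : forall a, reach (rK R) (rl R) a -> node (tgr G) (phi a).
  move=> a Ra; apply: hom.1; exact: Ra.
have homL : forall a g, reach (rK R) (rl R) a -> lab (rK R) a = Some g ->
    lab (tgr G) (phi a) = Some g /\ att (tgr G) (phi a) = map phi (att (rK R) a).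
  move=> a g Ra La; apply: hom.2 => //; exact: Ra.
have ClK : Cl (rK R) := wfK.2.2.1.
have F1 := homL (rl R) f (reach_refl _ _) Lf.
have Nphl : node (tgr G) (phi (rl R)) := homN (rl R) (reach_refl _ _).
have homR : forall a b, reach (rK R) (rl R) a -> reach (rK R) a b -> reach (tgr G) (phi a) (phi b).
  move=> a b Ra Rab; elim: Rab Ra => [x|v u w Hu _ IH] Rv; first exact: reach_refl.
  have Nv := cl_reach ClK NKl Rv.
  case E: (lab (rK R) v) => [g|].
  - have [_ At] := homL v g Rv E.
    apply: reach_step (IH (reach_rcons Rv Hu)); rewrite At; exact: map_f.
  - exfalso; have := wfK.2.1 v Nv; rewrite E.
    by case: (att (rK R) v) Hu.
have ne_l : forall a y, Good normal G0 G a -> reach (tgr G) a y -> y <> phi (rl R).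
  move=> a y Gd Ry; exact: good_ne B0 Gd Ry F1.1 Cf.
have NH2r : node H2 (psi (rr R)).
  apply/nodeH2; case: (classic (reach (rK R) (rl R) (rr R))) => Lr.
  + left; rewrite (psi_eq (rr R) (reach_refl _ _) Lr); exact: homN.
  + right; exists (rr R); split => //; split => //; exact: reach_refl.
have ClH2 : Cl H2.
  move=> x y /nodeH2 [Nx|[w [[Rw nRw] <-]]] Hy.
  - have [_ Ax] := oldH2 x Nx; rewrite Ax in Hy.
    case/mapP: Hy => y0 Hy0 ->; case: eqP => _; first exact: NH2r.
    apply/nodeH2; left; exact: ClG Nx Hy0.
  - have [_ Ax] := newH2 w (conj Rw nRw); rewrite Ax in Hy.
    case/mapP: Hy => c Hc ->.
    have Rc := reach_rcons Rw Hc.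
    case: eqP => _; first exact: NH2r.
    case: (classic (reach (rK R) (rl R) c)) => Lc.
    + rewrite (psi_eq c Rc Lc); apply/nodeH2; left; exact: homN.
    + apply/nodeH2; right; exists c; split => //.
have NH2rt : node H2 rt.
  rewrite /rt; case: eqP => _; first exact: NH2r.
  apply/nodeH2; left; exact: NrG.
have NH_H2 : forall x, node (tgr H) x -> node H2 x.
  move=> x /nodeH Rx; exact: cl_reach ClH2 NH2rt Rx.
have ClH : Cl (tgr H).
  move=> x y Nx Hy; apply/nodeH; rewrite (attH x Nx).2 in Hy.
  exact: reach_rcons ((nodeH x).1 Nx) Hy.
have transfer : forall a, Good normal G0 G a -> node (tgr H) a -> Good normal G0 H a.
  move=> a Gd Na.
  have Na' := Gd.1.
  have attR : forall y, reach (tgr G) a y -> att H2 y = att (tgr G) y.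
    move=> y Ry; have Ny := cl_reach ClG Na' Ry; rewrite (oldH2 y Ny).2.
    rewrite -[RHS]map_id; apply/eq_in_map => b Hb /=.
    case: eqP => // E; exfalso; exact: ne_l Gd (reach_rcons Ry Hb) E.
  have RHG : forall y, reach (tgr H) a y -> reach (tgr G) a y.
    move=> y Ry.
    suff S : forall a', reach (tgr H) a' y -> reach (tgr G) a a' -> node (tgr H) a' ->
        reach (tgr G) a' y.
      exact: S a Ry (reach_refl _ _) Na.
    move=> a' R'; elim: R' => [x|v u w Hu _ IH] Rv Nv; first exact: reach_refl.
    have Hu' : u \in att (tgr G) v by rewrite -(attR v Rv) -(attH v Nv).2.
    exact: reach_step Hu' (IH (reach_rcons Rv Hu') (ClH v u Nv Hu)).
  split => //; case: Gd => _ [w hw [rw Ag]]; exists w => //; split => // y Ry.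
  have Ny := cl_reach ClH Na Ry; have RGy := RHG y Ry; have NGy := cl_reach ClG Na' RGy.
  rewrite (attH y Ny).1 (attH y Ny).2 (oldH2 y NGy).1 (attR y RGy); exact: Ag.
split; first by rewrite rootH; apply/nodeH; exact: reach_refl.
split; first exact: ClH.
move=> x u Nx Hu.
have Nu : node (tgr H) u := ClH x u Nx (nrm_att Hu).
rewrite (nrm_same _ (attH x Nx).1 (attH x Nx).2) in Hu.
case/nodeH2: (NH_H2 x Nx) => [NGx|[w [[Rw nRw] Ew]]].
- have [Lx Ax] := oldH2 x NGx; rewrite (nrm_map _ Lx Ax) in Hu.
  case/mapP: Hu => u0 Hu0 Eu.
  have Gd0 := GdG x u0 NGx Hu0.
  have ne := ne_l u0 u0 Gd0 (reach_refl _ _).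
  move: Eu; case: eqP => // _ Eu; subst u; exact: transfer.
- subst x; have [Lx Ax] := newH2 w (conj Rw nRw); rewrite (nrm_map _ Lx Ax) in Hu.
  case/mapP: Hu => y0 Hy0 Eu.
  have LKw : lab (rK R) w <> None by move=> E; move: Hy0; rewrite /nrm E.
  have [z hz rz] := ptB prec_min BKl Pt (erefl _) (erefl _) (erefl _) (erefl _)
     (reach_refl _ _) (erefl _) Rw nRw LKw Hy0.
  have Rry := reach_rcons Rw (nrm_att Hy0).
  have Hz : z \in att (rK R) (rl R) := nrm_att hz.
  have Rly := reach_step Hz rz.
  rewrite (psi_eq y0 Rry Rly) in Eu.
  have Hpz : phi z \in nrm normal (tgr G) (phi (rl R)).
    rewrite (nrm_map _ (etrans F1.1 (esym Lf)) F1.2); exact: map_f.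
  have Gz := GdG _ _ Nphl Hpz.
  have Gy := good_sub ClG Gz (homR z y0 (reach_step Hz (reach_refl _ _)) rz).
  have ne := ne_l _ _ Gy (reach_refl _ _).
  move: Eu; case: eqP => // _ Eu; subst u; exact: transfer.
Qed.

Unset Implicit Arguments.

Theorem mainTheorem4
  (F : finType) (ar : F -> nat) (isC : pred F)
  (normal : F -> nat -> bool) (prec : rel F) (GRS : rule F -> Prop)
  (* argument separation: constructors have only safe positions *)
  (sep_C : forall c i, isC c -> ~~ normal c i)
  (* precedence: well-founded strict partial order, constructors minimal *)
  (prec_irr : irreflexive prec) (prec_trans : transitive prec)
  (prec_wf : well_founded (fun a b => prec a b))
  (prec_min : forall f c, isC c -> ~~ prec f c)
  (* constructor GRS *)
  (GRS_cons : forall R, GRS R -> constructor_rule ar isC R)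
  (* precedence terminating with argument separation *)
  (GRS_pt : forall R, GRS R -> pt normal prec (rhs R) (lhs R))
  (G0 G : tgraph F)
  (G0_wf : wf_tg ar G0) (G0_closed : closed_tg G0) (G0_basic : basic isC G0)
  (red : steps GRS G0 G) :
  forall v u, SP normal G v -> u \in nrm normal (tgr G) v ->
    nrmsub normal (restr_tg G u) G0.
Proof.
have I0 := inv_G0 sep_C G0_wf G0_basic.
have [NrG [ClG GdG]] : Inv normal G0 G.
  have S : forall G1 G2, steps GRS G1 G2 -> Inv normal G0 G1 -> Inv normal G0 G2.
    move=> G1 G2; elim=> [G3|G3 G4 G5 st _ IH] I; first exact: I.
    apply: IH; exact: (step_inv prec_min GRS_cons GRS_pt G0_basic I st).
  exact: S red I0.
move=> v u Sv Hu.
have Nv : node (tgr G) v.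
  elim: Sv {Hu} => [|v' u' _ IH hu]; first exact: NrG.
  exact: ClG IH (safe_att hu).
exact: good_nrmsub (GdG v u Nv Hu).
Qed.
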